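(* Let $a,b,c\in\mathcal V(\mathcal B)$ with $a\le_t b\le_t c$. Then (1) $(a\wedge\mathcal U)\otimes(c\vee\mathcal U)\le_k\mathcal U$; (2) $(a\vee\mathcal U)\otimes c\le_k b$; (3) $(a\wedge\mathcal U)\otimes(c\wedge\mathcal U)\le_k b$.
   Context: A bilattice $\langle\mathcal B,\le_t,\le_k\rangle$ is a nonempty set with two partial orders, each making $\mathcal B$ a lattice with top and bottom. Under $\le_t$, meet and join are $\wedge,\vee$, bottom $\mathcal F$, top $\mathcal T$; under $\le_k$, meet and join are $\otimes,\oplus$, bottom $\mathcal U$, top $\mathcal I$. Standing assumptions: $\mathcal B$ is complete for both orders, infinitely distributive, satisfies the (infinitary) interlacing conditions (each of $\wedge,\vee,\otimes,\oplus$ is monotone with respect to both orderings), and has a negation. $\mathcal V(\mathcal B)$ is the set of maps from ground atoms (of a fixed first-order language) to $\mathcal B$ with pointwise orders and operations; $\mathcal U$ also denotes the constant map with value $\mathcal U$. *)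

(* Defs.v *)
Definition is_lub {B : Type} (le : B -> B -> Prop) {I : Type} (f : I -> B) (s : B) :=
  (forall i, le (f i) s) /\ (forall z, (forall i, le (f i) z) -> le s z).
Definition is_glb {B : Type} (le : B -> B -> Prop) {I : Type} (f : I -> B) (s : B) :=
  (forall i, le s (f i)) /\ (forall z, (forall i, le z (f i)) -> le z s).

Definition partial_order {B : Type} (le : B -> B -> Prop) :=
  (forall x, le x x) /\ (forall x y, le x y -> le y x -> x = y) /\
  (forall x y z, le x y -> le y z -> le x z).

Record bilattice := Bilattice {
  carrier :> Type;
  le_t : carrier -> carrier -> Prop;
  le_k : carrier -> carrier -> Prop;
  meet_t : carrier -> carrier -> carrier;
  join_t : carrier -> carrier -> carrier;
  meet_k : carrier -> carrier -> carrier;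
  join_k : carrier -> carrier -> carrier;
  bF : carrier; bT : carrier; bU : carrier; bI : carrier;
  neg : carrier -> carrier;
  inf_t : forall I : Type, (I -> carrier) -> carrier;
  sup_t : forall I : Type, (I -> carrier) -> carrier;
  inf_k : forall I : Type, (I -> carrier) -> carrier;
  sup_k : forall I : Type, (I -> carrier) -> carrier;
  le_t_po : partial_order le_t;
  le_k_po : partial_order le_k;
  meet_t_glb : forall x y, is_glb le_t (fun b : bool => if b then x else y) (meet_t x y);
  join_t_lub : forall x y, is_lub le_t (fun b : bool => if b then x else y) (join_t x y);
  meet_k_glb : forall x y, is_glb le_k (fun b : bool => if b then x else y) (meet_k x y);
  join_k_lub : forall x y, is_lub le_k (fun b : bool => if b then x else y) (join_k x y);
  bF_bot : forall x, le_t bF x;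
  bT_top : forall x, le_t x bT;
  bU_bot : forall x, le_k bU x;
  bI_top : forall x, le_k x bI;
  inf_t_glb : forall I (f : I -> carrier), is_glb le_t f (inf_t I f);
  sup_t_lub : forall I (f : I -> carrier), is_lub le_t f (sup_t I f);
  inf_k_glb : forall I (f : I -> carrier), is_glb le_k f (inf_k I f);
  sup_k_lub : forall I (f : I -> carrier), is_lub le_k f (sup_k I f);
  distr : forall (o : carrier -> carrier -> carrier),
    (o = meet_t \/ o = join_t \/ o = meet_k \/ o = join_k) ->
    forall (S : forall I : Type, (I -> carrier) -> carrier),
    (S = inf_t \/ S = sup_t \/ S = inf_k \/ S = sup_k) ->
    forall x I (f : I -> carrier), inhabited I ->
      o x (S I f) = S I (fun i => o x (f i));
  interlace_t : forall I (f g : I -> carrier), (forall i, le_t (f i) (g i)) ->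
    le_t (inf_t I f) (inf_t I g) /\ le_t (sup_t I f) (sup_t I g) /\
    le_t (inf_k I f) (inf_k I g) /\ le_t (sup_k I f) (sup_k I g);
  interlace_k : forall I (f g : I -> carrier), (forall i, le_k (f i) (g i)) ->
    le_k (inf_t I f) (inf_t I g) /\ le_k (sup_t I f) (sup_t I g) /\
    le_k (inf_k I f) (inf_k I g) /\ le_k (sup_k I f) (sup_k I g);
  neg_t : forall x y, le_t x y -> le_t (neg y) (neg x);
  neg_k : forall x y, le_k x y -> le_k (neg x) (neg y);
  neg_invol : forall x, neg (neg x) = x
}.

(* V(B): valuations = maps from ground atoms (an arbitrary type Atom) to B,
   with pointwise orders and operations. *)
Section Valuations.
Variables (Atom : Type) (B : bilattice).
Definition valuation := Atom -> B.
Definition vle_t (v w : valuation) := forall p, le_t B (v p) (w p).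
Definition vle_k (v w : valuation) := forall p, le_k B (v p) (w p).
Definition vmeet_t (v w : valuation) : valuation := fun p => meet_t B (v p) (w p).
Definition vjoin_t (v w : valuation) : valuation := fun p => join_t B (v p) (w p).
Definition vmeet_k (v w : valuation) : valuation := fun p => meet_k B (v p) (w p).
Definition vjoin_k (v w : valuation) : valuation := fun p => join_k B (v p) (w p).
Definition vU : valuation := fun _ => bU B.
End Valuations.
Arguments vle_t {Atom B}. Arguments vle_k {Atom B}.
Arguments vmeet_t {Atom B}. Arguments vjoin_t {Atom B}.
Arguments vmeet_k {Atom B}. Arguments vjoin_k {Atom B}.
Arguments vU {Atom B}.

(* Main.v *)
Require Import Defs.
From Stdlib Require Import Setoid.

Section S.
Variable B : bilattice.

Lemma glb_uniq (le : B -> B -> Prop) (I : Type) (f : I -> B) s s' :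
  partial_order le -> is_glb le f s -> is_glb le f s' -> s = s'.
Proof.
  intros [_ [A _]] [H1 H2] [H3 H4]. apply A; [apply H4|apply H2]; assumption.
Qed.

Lemma lub_uniq (le : B -> B -> Prop) (I : Type) (f : I -> B) s s' :
  partial_order le -> is_lub le f s -> is_lub le f s' -> s = s'.
Proof.
  intros [_ [A _]] [H1 H2] [H3 H4]. apply A; [apply H2|apply H4]; assumption.
Qed.

Definition pr (x y : B) := fun b : bool => if b then x else y.

Lemma mk_eq x y : meet_k B x y = inf_k B bool (pr x y).
Proof. apply (glb_uniq (le_k B) bool (pr x y)). apply le_k_po. apply meet_k_glb. apply inf_k_glb. Qed.
Lemma mt_eq x y : meet_t B x y = inf_t B bool (pr x y).
Proof. apply (glb_uniq (le_t B) bool (pr x y)). apply le_t_po. apply meet_t_glb. apply inf_t_glb. Qed.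
Lemma jt_eq x y : join_t B x y = sup_t B bool (pr x y).
Proof. apply (lub_uniq (le_t B) bool (pr x y)). apply le_t_po. apply join_t_lub. apply sup_t_lub. Qed.

Lemma mk_mono_t m x y : le_t B x y -> le_t B (meet_k B m x) (meet_k B m y).
Proof.
  intros H. rewrite !mk_eq. apply interlace_t.
  intros [|]; simpl; [apply le_t_po|exact H].
Qed.

Lemma mt_mono_k m x y : le_k B x y -> le_k B (meet_t B x m) (meet_t B y m).
Proof.
  intros H. rewrite !mt_eq. apply interlace_k.
  intros [|]; simpl; [exact H|apply le_k_po].
Qed.

Lemma jt_mono_k m x y : le_k B x y -> le_k B (join_t B x m) (join_t B y m).
Proof.
  intros H. rewrite !jt_eq. apply interlace_k.
  intros [|]; simpl; [exact H|apply le_k_po].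
Qed.

Lemma mk_le1 x y : le_k B (meet_k B x y) x.
Proof. apply (proj1 (meet_k_glb B x y) true). Qed.
Lemma mk_le2 x y : le_k B (meet_k B x y) y.
Proof. apply (proj1 (meet_k_glb B x y) false). Qed.
Lemma mk_absorb m x : le_k B m x -> meet_k B m x = m.
Proof.
  intros H. destruct (le_k_po B) as [R [A T]]. apply A. apply mk_le1.
  apply (proj2 (meet_k_glb B m x)). intros [|]; simpl; [apply R|exact H].
Qed.

Lemma key m x y z : le_k B m x -> le_k B m z -> le_t B x y -> le_t B y z -> le_k B m y.
Proof.
  intros H1 H2 H3 H4.
  assert (E : meet_k B m y = m).
  { destruct (le_t_po B) as [R [A T]]. apply A.
    - rewrite <- (mk_absorb m z H2) at 2. apply mk_mono_t; auto.
    - rewrite <- (mk_absorb m x H1) at 1. apply mk_mono_t; auto. }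
  rewrite <- E. apply mk_le2.
Qed.

Lemma mt_U x : le_k B (meet_t B x (bU B)) x.
Proof.
  destruct (le_k_po B) as [R [A T]].
  assert (E : meet_t B x x = x).
  { destruct (le_t_po B) as [R' [A' T']]. apply A'.
    apply (proj1 (meet_t_glb B x x) true).
    apply (proj2 (meet_t_glb B x x)). intros [|]; apply R'. }
  rewrite <- E at 2. rewrite !mt_eq. apply interlace_k.
  intros [|]; simpl; [apply R|apply bU_bot].
Qed.

Lemma jt_U x : le_k B (join_t B x (bU B)) x.
Proof.
  destruct (le_k_po B) as [R [A T]].
  assert (E : join_t B x x = x).
  { destruct (le_t_po B) as [R' [A' T']]. apply A'.
    apply (proj2 (join_t_lub B x x)). intros [|]; apply R'.
    apply (proj1 (join_t_lub B x x) true). }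
  rewrite <- E at 2. rewrite !jt_eq. apply interlace_k.
  intros [|]; simpl; [apply R|apply bU_bot].
Qed.

End S.

Theorem mainTheorem10 (Atom : Type) (B : bilattice) (a b c : valuation Atom B) :
  vle_t a b -> vle_t b c ->
  vle_k (vmeet_k (vmeet_t a vU) (vjoin_t c vU)) vU /\
  vle_k (vmeet_k (vjoin_t a vU) c) b /\
  vle_k (vmeet_k (vmeet_t a vU) (vmeet_t c vU)) b.
Proof.
  intros Hab Hbc. destruct (le_k_po B) as [R [A T]].
  destruct (le_t_po B) as [R' [A' T']].
  unfold vle_k, vle_t, vmeet_k, vmeet_t, vjoin_t, vU in *.
  split; [|split]; intros p.
  - eapply key with (x := meet_t B (a p) (bU B)) (z := join_t B (c p) (bU B)).
    + apply mk_le1. + apply mk_le2.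
    + apply (proj1 (meet_t_glb B _ _) false).
    + apply (proj1 (join_t_lub B _ _) false).
  - eapply key with (x := a p) (z := c p); auto.
    + eapply T. apply mk_le1. apply jt_U.
    + apply mk_le2.
  - eapply key with (x := a p) (z := c p); auto.
    + eapply T. apply mk_le1. apply mt_U.
    + eapply T. apply mk_le2. apply mt_U.
Qed.
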